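(* Let $\mathcal{E}:\mathcal{S}(\mathcal{H}_1)\otimes\mathcal{S}(\mathcal{H}_2)\to\mathcal{S}(\mathcal{H}_1)$, with $\mathcal{H}_1$ the space of $n$ qubits, be any channel that commutes with the dephasing map, $\mathcal{E}\circ\Delta=\Delta\circ\mathcal{E}$, where $\Delta(\rho)=\sum_x|x\rangle\langle x|\rho|x\rangle\langle x|$. For a state $\tau\in\mathcal{S}(\mathcal{H}_2)$ define $\mathcal{E}_\tau(\rho):=\mathcal{E}(\rho\otimes\tau)$. Then for all states $\tau$, $\mathcal{D}\big(\mathcal{E}_\tau,H^{\otimes n}\big)\ge 1-\frac{1}{2^n}$.
   Context: $\mathcal{D}$ is the induced trace distance on channels, $\mathcal{D}(\mathcal{E},\mathcal{V})=\max_\rho\tfrac12\|\mathcal{E}(\rho)-\mathcal{V}(\rho)\|_1$, and $H^{\otimes n}$ denotes the channel $\rho\mapsto H^{\otimes n}\rho H^{\otimes n}$. *)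

(* Defs.v *)
From HB Require Import structures.
From mathcomp Require Import all_boot all_order all_algebra.
From mathcomp Require Import mxtens.
Set Implicit Arguments. Unset Strict Implicit. Unset Printing Implicit Defensive.
Import Order.TTheory GRing.Theory Num.Theory.
Local Open Scope ring_scope.

Section QDefs.
Context {C : numClosedFieldType}.

Definition dagger {p q : nat} (A : 'M[C]_(p, q)) : 'M[C]_(q, p) :=
  (map_mx Num.conj A)^T.

Definition psdmx {d : nat} (A : 'M[C]_d) : Prop :=
  A \is hermsymmx /\
  forall v : 'rV[C]_d, 0 <= (v *m A *m dagger v) ord0 ord0.

Definition is_state {d : nat} (rho : 'M[C]_d) : Prop :=
  psdmx rho /\ \tr rho = 1.

(* ampliation  Phi (x) id_k  : 'M_(a*k) -> 'M_(b*k), with the tensor index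
   convention of mxtens (index (i,p) of 'I_(a*k) is i*k+p). *)
Definition ampl {a b : nat} (Phi : 'M[C]_a -> 'M[C]_b) (k : nat)
  (X : 'M[C]_(a * k)) : 'M[C]_(b * k) :=
  \matrix_(i, j)
    Phi (\matrix_(i', j') X (mxtens_index (i', (mxtens_unindex i).2))
                            (mxtens_index (j', (mxtens_unindex j).2)))
        (mxtens_unindex i).1 (mxtens_unindex j).1.

Definition completely_positive {a b : nat} (Phi : 'M[C]_a -> 'M[C]_b) : Prop :=
  forall (k : nat) (X : 'M[C]_(a * k)), psdmx X -> psdmx (ampl Phi X).

Definition trace_preserving {a b : nat} (Phi : 'M[C]_a -> 'M[C]_b) : Prop :=
  forall X : 'M[C]_a, \tr (Phi X) = \tr X.

Definition is_channel {a b : nat} (Phi : 'M[C]_a -> 'M[C]_b) : Prop :=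
  linear Phi /\ completely_positive Phi /\ trace_preserving Phi.

Definition dephase {d : nat} (X : 'M[C]_d) : 'M[C]_d :=
  \matrix_(i, j) (if i == j then X i j else 0).

Definition dephase_first {a k : nat} (X : 'M[C]_(a * k)) : 'M[C]_(a * k) :=
  \matrix_(i, j)
    (if (mxtens_unindex i).1 == (mxtens_unindex j).1 then X i j else 0).

(* trace norm ||A||_1 = tr sqrt(A^dagger A) = sum of the square roots of the
   eigenvalues of the positive semidefinite matrix A^dagger A *)
Definition trace_norm {d : nat} (A : 'M[C]_d) : C :=
  \sum_(i < d) sqrtC (spectral_diag (dagger A *m A) ord0 i).

Definition trace_dist {d : nat} (A B : 'M[C]_d) : C := trace_norm (A - B) / 2.

Definition hadamard1 : 'M[C]_2 :=
  (sqrtC 2)^-1 *: \matrix_(i, j)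
     (if (i == 1 :> 'I_2) && (j == 1 :> 'I_2) then -1 else 1).

Definition hadamard (n : nat) : 'M[C]_(2 ^ n) := ntensmx hadamard1 n.

End QDefs.

(* Main.v *)
Require Import Defs.
From HB Require Import structures.
From mathcomp Require Import all_boot all_order all_algebra.
From mathcomp Require Import mxtens sesquilinear spectral ring.
Import Order.TTheory GRing.Theory Num.Theory.
Local Open Scope ring_scope.

Section TN.
Variable C : numClosedFieldType.
Local Open Scope sesquilinear_scope.

Lemma daggerE p q (A : 'M[C]_(p,q)) : dagger A = A ^t*.
Proof. by rewrite /dagger map_trmx. Qed.

Lemma dot_entry d (P Q X : 'M[C]_d) i j :
  (P *m X *m Q^t*) i j = dotmx (row i P *m X) (row j Q).
Proof.
rewrite dotmxE !mxE; apply: eq_bigr => k _; rewrite !mxE.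
congr (_ * _); apply: eq_bigr => l _; rewrite !mxE //.
Qed.

Lemma dot_adj p d (u : 'rV[C]_p) (v : 'rV[C]_d) (M : 'M[C]_(p, d)) :
  dotmx (u *m M) v = dotmx u (v *m M^t*).
Proof.
by rewrite !dotmxE trmx_mul map_mxM trmxCK mulmxA.
Qed.

Lemma cs d (u v : 'rV[C]_d) : `|dotmx u v| <= sqrtC (dotmx u u) * sqrtC (dotmx v v).
Proof. exact: (CauchySchwarz_sqrt (dotmx (n:=d)) u v). Qed.

Lemma tn_ge d (A W : 'M[C]_d) : W \is unitarymx ->
  'Re (\tr (dagger A *m W)) <= trace_norm A.
Proof.
move=> Wu.
have WtW : W^t* *m W = 1%:M.
  by have /unitarymxP := (trmxC_unitary W); rewrite Wu trmxCK => ->.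
rewrite daggerE /trace_norm daggerE.
set B := A^t* *m A.
have Bn : B \is normalmx.
  apply/normalmxP; rewrite /B trmx_mul map_mxM trmxCK //.
have := Bn => /orthomx_spectralP.
set P := spectralmx B; set mu := spectral_diag B => BE.
have Pu : P \is unitarymx by exact: spectral_unitarymx.
have PPt : P *m P^t* = 1%:M by apply/unitarymxP.
have PtP : P^t* *m P = 1%:M by apply: mulmx1C.
rewrite invmx_unitary // in BE.
have mu_i : forall i, mu ord0 i = dotmx (row i P *m A^t*) (row i P *m A^t*).
  move=> i.
  have : P *m B *m P^t* = diag_mx mu.
    by rewrite BE !mulmxA PPt mul1mx -mulmxA PPt mulmx1.
  move/matrixP/(_ i i); rewrite dot_entry mxE eqxx mulr1n => <-.
  by rewrite /B mulmxA dot_adj.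
have trE : \tr (A^t* *m W) = \sum_i dotmx (row i P *m A^t*) (row i P *m W^t*).
  rewrite -[A^t* *m W]mul1mx -PtP -mulmxA mxtrace_mulC mulmxA.
  rewrite /mxtrace; apply: eq_bigr => i _.
  by rewrite -(mulmxA P) dot_entry mulmxA dot_adj.
rewrite trE.
rewrite raddf_sum /=; apply: ler_sum => i _.
set u := row i P.
have uu : dotmx u u = 1 by rewrite /u ((row_unitarymxP (M:=P)) Pu) eqxx.
have vv : dotmx (u *m W^t*) (u *m W^t*) = 1.
  by rewrite dot_adj trmxCK -mulmxA WtW mulmx1.
apply: le_trans (leif_Re_Creal _).1 _.
rewrite mu_i.
have := @cs _ (u *m A^t*) (u *m W^t*).
by rewrite vv sqrtC1 mulr1.
Qed.

Lemma ntens_col m n (A : 'M[C]_(m,n)) (c : C) :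
  (forall i j, nat_of_ord j = 0%N -> A i j = c) ->
  forall k i j, nat_of_ord j = 0%N -> ntensmx_rec A k i j = c ^+ k.+1.
Proof.
move=> hA; elim=> [|k IH] i j j0 /=; first by rewrite hA // expr1.
rewrite mxE hA /=; last by rewrite j0 div0n.
rewrite IH ?exprS //=; by rewrite j0 mod0n.
Qed.

Lemma ntens_row m n (A : 'M[C]_(m,n)) (c : C) :
  (forall i j, nat_of_ord i = 0%N -> A i j = c) ->
  forall k i j, nat_of_ord i = 0%N -> ntensmx_rec A k i j = c ^+ k.+1.
Proof.
move=> hA; elim=> [|k IH] i j j0 /=; first by rewrite hA // expr1.
rewrite mxE hA /=; last by rewrite j0 div0n.
rewrite IH ?exprS //=; by rewrite j0 mod0n.
Qed.

Lemma had_col n (i j : 'I_(2 ^ n)) : nat_of_ord j = 0%N ->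
  hadamard (C:=C) n i j = (sqrtC 2)^-1 ^+ n.
Proof.
case: n i j => [|n] i j j0.
  by rewrite /hadamard /= !ord1 mxE.
apply: ntens_col => // a b b0; rewrite /hadamard1 !mxE.
have -> : (b == 1 :> 'I_2) = false by rewrite -val_eqE /= b0.
by rewrite andbF mulr1.
Qed.

Lemma had_row n (i j : 'I_(2 ^ n)) : nat_of_ord i = 0%N ->
  hadamard (C:=C) n i j = (sqrtC 2)^-1 ^+ n.
Proof.
case: n i j => [|n] i j j0.
  by rewrite /hadamard /= !ord1 mxE.
apply: ntens_row => // a b b0; rewrite /hadamard1 !mxE.
have -> : (a == 1 :> 'I_2) = false by rewrite -val_eqE /= b0.
by rewrite mulr1.
Qed.

Lemma tr_tens a b (X : 'M[C]_a) (Y : 'M[C]_b) : \tr (tensmx X Y) = \tr X * \tr Y.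
Proof.
rewrite /mxtrace mulr_sum; apply: eq_bigr => k _; by rewrite mxE.
Qed.

Lemma psd_gram p d (B : 'M[C]_(p, d)) : psdmx (dagger B *m B).
Proof.
split.
  apply/is_hermitianmxP; rewrite expr0 scale1r !daggerE.
  by rewrite trmx_mul map_mxM trmxCK.
move=> v; rewrite !daggerE -dotmxE mulmxA dot_adj.
rewrite dotmxE mxE sumr_ge0 // => k _; rewrite !mxE; exact: mul_conjC_ge0.
Qed.
End TN.

Theorem lemma8 (C : numClosedFieldType) (n m : nat)
  (E : 'M[C]_(2 ^ n * m) -> 'M[C]_(2 ^ n)) :
  is_channel E ->
  (forall X : 'M[C]_(2 ^ n * m), E (dephase_first X) = dephase (E X)) ->
  forall tau : 'M[C]_m, is_state tau ->
  exists rho : 'M[C]_(2 ^ n), is_state rho /\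
    1 - ((2 ^ n)%:R)^-1 <=
      trace_dist (E (tensmx rho tau)) (hadamard n *m rho *m hadamard n).
Proof.
move=> [_ [_ TP]] hdeph tau [_ trtau].
have N0 : (0 < 2 ^ n)%N by rewrite expn_gt0.
pose z0 : 'I_(2^n) := Ordinal N0.
have [rho [rhoE rhost]] : exists rho : 'M[C]_(2 ^ n),
    (forall i j, rho i j = ((i == z0) && (j == z0))%:R) /\ is_state rho.
  pose e : 'M[C]_(1, 2^n) := delta_mx 0 z0.
  have rE : forall i j, (dagger e *m e) i j = ((i == z0) && (j == z0))%:R.
    by move=> i j; rewrite !mxE big_ord1 !mxE !eqxx /= conjC_nat -natrM mulnb.
  exists (dagger e *m e); split => //; split; first exact: psd_gram.
  rewrite /mxtrace (bigD1 z0) //= big1 => [|i /negbTE ine]; rewrite rE ?eqxx ?ine //.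
  by rewrite addr0.
exists rho; split => //.
have trrho : \tr rho = 1 by case: rhost.
set sigma := E (tensmx rho tau).
have deph : dephase_first (tensmx rho tau) = tensmx rho tau.
  apply/matrixP => i j; rewrite !mxE; case: eqP => // ne.
  rewrite rhoE.
  have -> : ((mxtens_unindex i).1 == z0) && ((mxtens_unindex j).1 == z0) = false.
    by apply/negbTE/negP => /andP[/eqP e1 /eqP e2]; apply: ne; rewrite e1 e2.
  by rewrite mul0r.
have sdiag : forall i j, i != j -> sigma i j = 0.
  by move=> i j ne; rewrite /sigma -deph hdeph mxE (negbTE ne).
have trs : \tr sigma = 1 by rewrite /sigma TP tr_tens trrho trtau mulr1.
set c : C := ((2 ^ n)%:R)^-1.
have Nn0 : (2 ^ n)%:R != 0 :> C by rewrite pnatr_eq0 -lt0n.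
have cN : c * (2 ^ n)%:R = 1 by rewrite mulVf.
have creal : c \is Num.real by rewrite realV realn.
have s2 : (sqrtC 2)^-1 ^+ n * (sqrtC 2)^-1 ^+ n = c :> C.
  by rewrite /c -exprMn -invfM -expr2 sqrtCK natrX exprVn.
set J : 'M[C]_(2 ^ n) := const_mx 1.
have HdE : hadamard n *m rho *m hadamard n = c *: J.
  apply/matrixP => i j; rewrite !mxE (bigD1 z0) //= big1 => [|k kne]; last first.
    rewrite mxE big1 ?mul0r // => l _; rewrite rhoE (negbTE kne) andbF mulr0 //.
  rewrite mxE (bigD1 z0) //= big1 => [|l lne]; last by rewrite rhoE (negbTE lne) mulr0.
  by rewrite rhoE eqxx mulr1 !addr0 had_col // had_row // /= mulr1 s2.
have JJ : J *m J = (2 ^ n)%:R *: J.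
  apply/matrixP => i j; rewrite /J !mxE.
  under eq_bigr do rewrite !mxE mulr1.
  by rewrite sumr_const card_ord mulr1.
have trJ : \tr J = (2 ^ n)%:R.
  rewrite /mxtrace; under eq_bigr do rewrite /J mxE.
  by rewrite sumr_const card_ord.
pose W := 1%:M - (2 * c) *: J.
have Wd : dagger W = W.
  apply/matrixP => i j; rewrite /dagger /W /J !mxE conj_Creal ?(eq_sym i j) //.
  by rewrite mulr1 rpredB ?rpredM ?realn.
have Wu : W \is unitarymx.
  apply/unitarymxP; rewrite -daggerE Wd /W mulmxBl !mulmxBr !mul1mx mulmx1.
  have -> : (2 * c) *: J *m ((2 * c) *: J) = (2 * c + 2 * c) *: J.
    rewrite -scalemxAl -scalemxAr JJ !scalerA; congr (_ *: _).
    rewrite /c; field; exact: Nn0.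
  by rewrite scalerDl opprB addrK subrK.
have dA : dagger (sigma - c *: J) = dagger sigma - c *: J.
  apply/matrixP => i j; rewrite /dagger /J !mxE rmorphB /= mulr1 (conj_Creal creal) //.
have trS : \tr (dagger sigma) = 1.
  rewrite /mxtrace; under eq_bigr do rewrite /dagger !mxE.
  by rewrite -rmorph_sum /= -/(mxtrace sigma) trs conjC1.
have trSJ : \tr (dagger sigma *m J) = 1.
  rewrite -trS /mxtrace; apply: eq_bigr => i _; rewrite mxE (bigD1 i) //= big1.
    by rewrite /J !mxE mulr1 addr0.
  by move=> k ki; rewrite /dagger /J !mxE sdiag // conjC0 mul0r.
have trT : \tr (dagger (sigma - c *: J) *m W) = (1 - c) * 2.
  rewrite dA /W mulmxBl !mulmxBr !mulmx1 -!scalemxAl -!scalemxAr JJ.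
  rewrite !raddfB /= !linearZ /= trS trSJ trJ /c; field; exact: Nn0.
rewrite /trace_dist HdE ler_pdivlMr ?ltr0n //.
apply: (le_trans _ (@tn_ge _ _ (sigma - c *: J) W Wu)).
rewrite trT; have -> : 'Re ((1 - c) * 2) = (1 - c) * 2.
  by apply/Creal_ReP; rewrite rpredM ?rpredB ?realn ?creal ?real1.
by [].
Qed.
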